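(* For every $n\ge1$, $$\sum_{e\in\mathbf I_n(021)}s^{\mathrm{dist}(e)}=\sum_{p\in SP_{n-1}}s^{\mathrm{asc}(p)}.$$
   Context: $\mathbf I_n=\{(e_1,\dots,e_n):0\le e_i\le i-1\}$ and $\mathbf I_n(021)$ is the set of those $e$ with no $i<j<k$ such that $e_i<e_k<e_j$. $\mathrm{dist}(e)$ is the number of distinct positive values among the entries of $e$. A Schröder $m$-path is a lattice path from $(0,0)$ to $(2m,0)$ with steps $(1,1)$ (up), $(1,-1)$ (down) and $(2,0)$ (flat) never going below the $x$-axis; $SP_m$ is the set of them ($SP_0$ consists of the empty path). An ascent of a Schröder path is a maximal run of consecutive up steps, and $\mathrm{asc}(p)$ is the number of ascents of $p$. *)

(* Defs.v *)
From HB Require Import structures.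
From mathcomp Require Import all_boot all_order all_algebra.
Set Implicit Arguments. Unset Strict Implicit. Unset Printing Implicit Defensive.
Import GRing.Theory.

(* ---------- Inversion sequences ----------
   e = (e_1,...,e_n) with 0 <= e_i <= i-1 is represented (0-indexed) as a
   finite function e : 'I_n -> 'I_n with e i <= i. *)
Definition is_inv (n : nat) (e : {ffun 'I_n -> 'I_n}) : bool :=
  [forall i, (e i <= i)%N].

Definition contains021 (n : nat) (e : {ffun 'I_n -> 'I_n}) : bool :=
  [exists i : 'I_n, exists j : 'I_n, exists k : 'I_n,
    [&& (i < j)%N, (j < k)%N, (e i < e k)%N & (e k < e j)%N]].

Definition avoids021 (n : nat) (e : {ffun 'I_n -> 'I_n}) : bool :=
  is_inv e && ~~ contains021 e.

Definition dist (n : nat) (e : {ffun 'I_n -> 'I_n}) : nat :=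
  #|[set e i | i in [pred i : 'I_n | (0 < e i)%N]]|.

Inductive step := Up | Down | Flat.

Definition step_code (s : step) : 'I_3 :=
  match s with Up => inord 0 | Down => inord 1 | Flat => inord 2 end.
Definition step_decode (i : 'I_3) : step :=
  match val i with 0 => Up | 1 => Down | _ => Flat end.
Lemma step_codeK : cancel step_code step_decode.
Proof. by case; rewrite /step_decode /= inordK. Qed.
HB.instance Definition _ := Finite.copy step (can_type step_codeK).

Fixpoint xlen (w : seq step) : nat :=
  match w with
  | [::] => 0
  | Flat :: w' => (xlen w').+2
  | _ :: w' => (xlen w').+1
  end.

Fixpoint valid_from (h : nat) (w : seq step) : bool :=
  match w with
  | [::] => h == 0
  | Up :: w' => valid_from h.+1 w'
  | Down :: w' => (0 < h) && valid_from h.-1 w'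
  | Flat :: w' => valid_from h w'
  end.

Definition is_schroder (m : nat) (w : seq step) : bool :=
  (xlen w == 2 * m) && valid_from 0 w.

Fixpoint asc_from (prevUp : bool) (w : seq step) : nat :=
  match w with
  | [::] => 0
  | Up :: w' => (~~ prevUp) + asc_from true w'
  | _ :: w' => asc_from false w'
  end.
Definition asc (w : seq step) : nat := asc_from false w.

(* generating polynomial  sum_{p in SP_m} s^asc(p).  A Schroeder m-path has
   at most 2m steps, so it appears exactly once as a k-tuple with k <= 2m. *)
Definition schroder_asc_poly (m : nat) : {poly int} :=
  \sum_(k < (2 * m).+1) \sum_(w : k.-tuple step | is_schroder m w) 'X^(asc w).

Definition inv021_dist_poly (n : nat) : {poly int} :=
  \sum_(e : {ffun 'I_n -> 'I_n} | avoids021 e) 'X^(dist e).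

(* Main.v *)
Require Import Defs.
From mathcomp Require Import all_boot all_order all_algebra.
From mathcomp Require Import zify.
Set Implicit Arguments. Unset Strict Implicit. Unset Printing Implicit Defensive.
Import GRing.Theory.

Module GenM.
Local Open Scope ring_scope.

Lemma cond_lt s j : (s < j)%N -> forall v,
  ((v == 0%N) || (s <= v)%N) && (maxn s v == j) = (v == j).
Proof. move=> h v; apply/idP/idP; lia. Qed.
Lemma cond_gt s j : (j < s)%N -> forall v,
  ((v == 0%N) || (s <= v)%N) && (maxn s v == j) = false.
Proof. move=> h v; apply/idP/idP; lia. Qed.
Lemma cond_eq s v :
  ((v == 0%N) || (s <= v)%N) && (maxn s v == s) = (v == 0%N) || (v == s).
Proof. apply/idP/idP; lia. Qed.

Lemma sum_pred1 N a (F : nat -> {poly int}) :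
  \sum_(0 <= v < N | v == a) F v = if (a < N)%N then F a else 0.
Proof.
elim: N => [|N IH]; first by rewrite big_geq.
rewrite big_mkcond big_nat_recr //= -big_mkcond IH.
case: (ltngtP a N) => h.
- by rewrite (ltn_trans h (ltnSn _)) addr0.
- by rewrite ltnNge h addr0.
- by rewrite h ltnSn add0r.
Qed.

Definition cT (j : nat) : {poly int} := if j == 0%N then 1 else 2%:R.

Fixpoint T (m : nat) (j : nat) : {poly int} :=
  match m with
  | 0 => (j == 0%N)%:R
  | m'.+1 => if (j <= m'.+1)%N then cT j * T m' j + 'X * \sum_(i < j) T m' i else 0
  end.

Lemma T_gt m j : (m < j)%N -> T m j = 0.
Proof.
case: m => [|m] /= h; first by case: j h.
by rewrite leqNgt h.
Qed.

Lemma flatten_cons (T : Type) (x : seq T) s : flatten (x :: s) = x ++ flatten s.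
Proof. by []. Qed.

Section Gen.
Variables (A : eqType) (x0 : A) (psi : A -> nat -> A) (st wt : A -> nat).
Definition adm q v := (v == 0%N) || (st q <= v)%N.
Fixpoint Lg n : seq A :=
  if n is n'.+1 then
    flatten [seq [seq psi q v | v <- index_iota 0 n.+1 & adm q v] | q <- Lg n']
  else [:: x0].

Hypothesis st0 : st x0 = 0%N.
Hypothesis wt0 : wt x0 = 0%N.

Lemma LgS n : Lg n.+1 =
  flatten [seq [seq psi q v | v <- index_iota 0 n.+2 & adm q v] | q <- Lg n].
Proof. by []. Qed.

Hypothesis stpsi : forall n q v, q \in Lg n -> (v < n.+2)%N -> adm q v ->
  st (psi q v) = maxn (st q) v.
Hypothesis wtpsi : forall n q v, q \in Lg n -> (v < n.+2)%N -> adm q v ->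
  wt (psi q v) = (wt q + (st q < v))%N.

Lemma st_Lg n q : q \in Lg n -> (st q <= n)%N.
Proof.
elim: n q => [|n IH] q; first by rewrite inE => /eqP ->; rewrite st0.
rewrite LgS => /flatten_mapP [p pin]; case/mapP => v; rewrite mem_filter mem_index_iota /= => /andP [av vlt] ->.
rewrite (stpsi pin) // geq_max (leq_trans (IH _ pin)) //.
Qed.

Lemma inner_sum n q j : q \in Lg n ->
  \sum_(0 <= v < n.+2 | adm q v && (st (psi q v) == j)) 'X^(wt (psi q v))
  = (if st q == j then cT j * 'X^(wt q) else 0) +
    (if (st q < j)%N && (j <= n.+1)%N then 'X^((wt q).+1) else 0).
Proof.
move=> qin; have hq := st_Lg qin.
rewrite (congr_big_nat 0 n.+2 (fun v => adm q v && (maxn (st q) v == j))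
   (fun v => 'X^(wt q + (st q < v))%N)) //; last 2 first.
- move=> v /andP [_ vlt] /=; case a: (adm q v) => //=.
  by rewrite (stpsi qin).
- by move=> v /and3P [/andP [a _] _ vlt]; rewrite (wtpsi qin).
rewrite /adm.
case: (ltngtP (st q) j) => hsj.
- rewrite add0r (eq_bigl _ _ (cond_lt hsj)) sum_pred1 hsj /= ltnS addn1.
  by case: (j <= n.+1)%N.
- by rewrite (eq_bigl _ _ (cond_gt hsj)) big_pred0 // add0r.
- rewrite -hsj /= addr0 (eq_bigl _ _ (cond_eq _)) /cT.
  case s0: (st q == 0%N).
  + rewrite (eq_bigl (fun v => v == 0%N)); last by move=> v /=; rewrite (eqP s0) orbb.
    by rewrite sum_pred1 /= addn0 mul1r.
  + rewrite (bigID (fun v => v == 0%N)) /=.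
    rewrite [X in X + _](eq_bigl (fun v => v == 0%N)); last by move=> v /=; case: eqP; rewrite ?andbT ?andbF.
    rewrite [X in _ + X](eq_bigl (fun v => v == st q)); last first.
      by move=> v /=; case: (v =P 0%N) => [->|] /=; [rewrite eq_sym s0 | rewrite andbT].
    rewrite !sum_pred1 /= ltnS (leq_trans hq) // ltnn addn0.
    by rewrite mulr_natl mulr2n.
Qed.

Lemma Lg_sum n j : \sum_(q <- Lg n | st q == j) 'X^(wt q) = T n j.
Proof.
elim: n j => [|n IH] j.
  by rewrite /= big_cons big_nil st0 wt0 expr0 addr0 eq_sym; case: (j == 0%N).
rewrite LgS big_flatten big_map.
rewrite (eq_big_seq (fun q => (if st q == j then cT j * 'X^(wt q) else 0) +
    (if (st q < j)%N && (j <= n.+1)%N then 'X^((wt q).+1) else 0))); last first.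
  move=> q qin; rewrite big_map big_filter_cond.
  exact: inner_sum qin.
rewrite big_split /= -!big_mkcond /= -mulr_sumr IH.
case: (leqP j n.+1) => hj; last first.
  by rewrite T_gt 1?mulr0 ?big1 ?addr0 // ?(ltnW hj) //; move=> q; rewrite andbF.
rewrite (eq_bigl (fun q => (st q < j)%N)); last by move=> q; rewrite andbT.
congr (_ + _).
rewrite (eq_bigr (fun q => 'X * 'X^(wt q))); last by move=> q _; rewrite exprS.
rewrite -mulr_sumr; congr (_ * _).
rewrite -(big_mkord xpredT).
under [RHS]eq_bigr => i _ do rewrite -IH big_mkcond.
rewrite exchange_big /= big_mkcond /=.
apply: eq_bigr => q _.
rewrite -big_mkcond (eq_bigl (fun i => i == st q)); last by move=> i; rewrite eq_sym.
by rewrite sum_pred1.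
Qed.

Lemma Lg_total n : \sum_(q <- Lg n) 'X^(wt q) = \sum_(j < n.+1) T n j.
Proof.
rewrite -(big_mkord xpredT).
under [RHS]eq_bigr => j _ do rewrite -Lg_sum big_mkcond.
rewrite exchange_big /=; apply: eq_big_seq => q qin.
rewrite -big_mkcond (eq_bigl (fun i => i == st q)); last by move=> i; rewrite eq_sym.
by rewrite sum_pred1 ltnS st_Lg.
Qed.

Lemma Lg_uniq n :
  (forall q q' v v', q \in Lg n -> q' \in Lg n -> (v < n.+2)%N -> (v' < n.+2)%N ->
     adm q v -> adm q' v' -> psi q v = psi q' v' -> q = q' /\ v = v') ->
  uniq (Lg n) -> uniq (Lg n.+1).
Proof.
move=> pinj un; rewrite LgS.
suff gen : forall L, uniq L -> {subset L <= Lg n} ->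
  uniq (flatten [seq [seq psi q v | v <- index_iota 0 n.+2 & adm q v] | q <- L]).
  by apply: gen un _.
elim=> [|q L IH] //; rewrite cons_uniq => /andP [qL uL] sub.
rewrite map_cons flatten_cons cat_uniq IH //; last by move=> x xin; apply: sub; rewrite inE xin orbT.
have qin : q \in Lg n by apply: sub; rewrite inE eqxx.
rewrite andbT; apply/andP; split.
  rewrite map_inj_in_uniq ?filter_uniq ?iota_uniq //.
  move=> v v'; rewrite !mem_filter !mem_index_iota /=.
  move=> /andP [a1 r1] /andP [a2 r2] e.
  by case: (pinj _ _ _ _ qin qin r1 r2 a1 a2 e).
apply/hasP => [[x /flatten_mapP [q' q'in xin'] xin]].
case/mapP: xin => v; rewrite mem_filter mem_index_iota /= => /andP [a1 r1] ex.
case/mapP: xin' => v'; rewrite mem_filter mem_index_iota /= => /andP [a2 r2] ex'.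
have q'in0 : q' \in Lg n by apply: sub; rewrite inE q'in orbT.
have [eq _] := pinj _ _ _ _ qin q'in0 r1 r2 a1 a2 (etrans (esym ex) ex').
by move: qL; rewrite eq q'in.
Qed.
End Gen.

End GenM.
Import GenM.

Module InvM.
Local Open Scope ring_scope.

Definition mx (s : seq nat) : nat := foldr maxn 0%N s.
Definition dd (s : seq nat) : nat := size (undup [seq x <- s | (0 < x)%N]).
Definition rc (s : seq nat) (v : nat) := rcons s v.
Definition Ginv := Lg [:: 0%N] rc mx.

Lemma mx_rcons s v : mx (rcons s v) = maxn (mx s) v.
Proof.
elim: s => [|x s IH] /=; first by rewrite /mx /= maxn0 max0n.
by rewrite /mx /= -/(mx _) IH maxnA.
Qed.

Lemma mx_ge s x : x \in s -> (x <= mx s)%N.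
Proof.
elim: s => [|y s IH] //=; rewrite inE => /orP [/eqP ->|h].
  by rewrite /mx /= leq_maxl.
by rewrite /mx /= -/(mx _) (leq_trans (IH h)) // leq_maxr.
Qed.

Lemma mx_mem s : (0 < mx s)%N -> mx s \in s.
Proof.
elim: s => [|y s IH] //=; rewrite /mx /= -/(mx _) inE.
case: (leqP y (mx s)) => h.
  by move=> h0; rewrite IH ?orbT.
by rewrite eqxx.
Qed.

Lemma size_filter_neq (u : seq nat) v : uniq u ->
  size [seq y <- u | y != v] = (size u - (v \in u))%N.
Proof.
move=> uu; rewrite size_filter -(count_predC (pred1 v)) count_uniq_mem //.
rewrite addnC -addnBA // subnn addn0.
by apply: eq_count => y /=.
Qed.

Lemma dd_rcons s v : (v == 0%N) || (mx s <= v)%N ->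
  dd (rcons s v) = (dd s + (mx s < v))%N.
Proof.
rewrite /dd filter_rcons.
case: (posnP v) => [->|vp] /=; first by rewrite addn0.
move=> h; rewrite undup_rcons size_rcons size_filter_neq ?undup_uniq //.
rewrite mem_undup mem_filter vp /=.
case: (ltngtP (mx s) v) h => hv //= _.
- have -> : (v \in s) = false.
    by apply/negbTE/negP => /mx_ge; rewrite leqNgt hv.
  by rewrite subn0 addn1.
- have vin : v \in s by rewrite -hv mx_mem // hv.
  rewrite vin subn1 addn0 prednK //.
  have : v \in undup [seq x <- s | (0 < x)%N] by rewrite mem_undup mem_filter vp vin.
  by case: (undup _).
Qed.

Lemma Ginv_total m : \sum_(s <- Ginv m) 'X^(dd s) = \sum_(j < m.+1) T m j.
Proof.
apply: Lg_total => //.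
- by move=> n q v _ _ _; rewrite /rc mx_rcons.
- by move=> n q v _ _ a; rewrite /rc dd_rcons.
Qed.

Lemma Ginv_uniq m : uniq (Ginv m).
Proof.
elim: m => [|m IH] //; apply: Lg_uniq => // q q' v v' _ _ _ _ _ _.
by move=> /rcons_inj [-> ->].
Qed.

Definition isinv (s : seq nat) := forall k, (k < size s)%N -> (nth 0%N s k <= k)%N.
Definition cont (s : seq nat) := exists i j k, [/\ (i < j)%N, (j < k)%N, (k < size s)%N,
  (nth 0%N s i < nth 0%N s k)%N & (nth 0%N s k < nth 0%N s j)%N].

Lemma nthr_lt (e : seq nat) v i : (i < size e)%N -> nth 0%N (rcons e v) i = nth 0%N e i.
Proof. by move=> h; rewrite nth_rcons h. Qed.
Lemma nthr_eq (e : seq nat) v : nth 0%N (rcons e v) (size e) = v.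
Proof. by rewrite nth_rcons ltnn eqxx. Qed.

Lemma GinvS m : Ginv m.+1 =
  flatten [seq [seq rc q v | v <- index_iota 0 m.+2 & adm mx q v] | q <- Ginv m].
Proof. by []. Qed.

Lemma Ginv_mem m s : s \in Ginv m <-> [/\ size s = m.+1, isinv s & ~ cont s].
Proof.
elim: m s => [|m IH] s.
  split.
    rewrite inE => /eqP ->; split => //.
      by move=> k; rewrite ltnS leqn0 => /eqP ->.
    by move=> [i [j [k [h1 h2 h3 _ _]]]]; move: h3 => /=; lia.
  case: s => [|x [|y s]] [ss hi _] //.
  have := hi 0%N erefl; rewrite /= leqn0 => /eqP ->; by rewrite inE.
split.
  rewrite GinvS => /flatten_mapP [e ein]; case/mapP => v.
  rewrite mem_filter mem_index_iota /= => /andP [a vlt] ->.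
  have [se ie ce] := (IH e).1 ein.
  split; first by rewrite /rc size_rcons se.
    move=> k; rewrite /rc size_rcons ltnS leq_eqVlt => /orP [/eqP ->|kl].
      by rewrite nthr_eq se -ltnS.
    by rewrite nthr_lt // ie.
  move=> [i [j [k [h1 h2 h3 h4 h5]]]].
  move: h3; rewrite /rc size_rcons ltnS leq_eqVlt => /orP [/eqP kE|kl].
    move: h4 h5; rewrite kE nthr_eq !nthr_lt -?kE ?(ltn_trans h1 h2) //.
    move=> h4 h5; move: a; rewrite /adm; case/orP => [/eqP v0|mv].
      by move: h4; rewrite v0.
    have jin : nth 0%N e j \in e by rewrite mem_nth // -kE.
    by move: (leq_trans (mx_ge jin) mv); rewrite leqNgt h5.
  apply: ce; exists i, j, k; split => //.
    by rewrite -(nthr_lt v (ltn_trans h1 (ltn_trans h2 kl))) -(nthr_lt v kl).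
  by rewrite -(nthr_lt v (ltn_trans h2 kl)) -(nthr_lt v kl).
case/lastP: s => [|e v] [ss iS cs]; first by [].
move: ss; rewrite size_rcons => -[se].
have ie : isinv e.
  by move=> k kl; rewrite -(nthr_lt v kl) iS // size_rcons ltnS ltnW.
have ce : ~ cont e.
  move=> [i [j [k [h1 h2 h3 h4 h5]]]]; apply: cs; exists i, j, k; split.
  - done.
  - done.
  - by rewrite size_rcons ltnS ltnW.
  - by rewrite !nthr_lt // (ltn_trans h1 (ltn_trans h2 h3)).
  - by rewrite !nthr_lt // (ltn_trans h2 h3).
have ein : e \in Ginv m by apply/IH.
rewrite GinvS; apply/flatten_mapP; exists e => //; apply/mapP; exists v => //.
rewrite mem_filter mem_index_iota /=.
have vle : (v < m.+2)%N.
  by have := iS (size e); rewrite nthr_eq size_rcons ltnS leqnn se => /(_ erefl).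
rewrite vle andbT /adm; apply/negPn/negP; rewrite negb_or -ltnNge => /andP [v0 vm].
have mp : (0 < mx e)%N by apply: leq_ltn_trans vm.
have min := mx_mem mp.
set j := index (mx e) e.
have jl : (j < size e)%N by rewrite index_mem.
have nj : nth 0%N e j = mx e by rewrite nth_index.
have e0 : nth 0%N e 0 = 0%N.
  by apply/eqP; rewrite -leqn0 (ie 0%N) // se.
have j0 : (0 < j)%N.
  rewrite lt0n; apply/negP => /eqP j0E; move: nj; rewrite j0E e0 => m0.
  by move: mp; rewrite -m0.
apply: cs; exists 0%N, j, (size e); split => //.
- by rewrite size_rcons.
- by rewrite nthr_eq nthr_lt ?e0 ?lt0n // -lt0n (ltn_trans j0 jl).
- by rewrite (nthr_eq e v) nthr_lt // nj.
Qed.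

Definition fseq (n : nat) (e : {ffun 'I_n -> 'I_n}) : seq nat :=
  [seq (e i : nat) | i <- enum 'I_n].

Lemma size_fseq n (e : {ffun 'I_n -> 'I_n}) : size (fseq e) = n.
Proof. by rewrite size_map size_enum_ord. Qed.

Lemma nth_fseq n (e : {ffun 'I_n -> 'I_n}) (i : 'I_n) : nth 0%N (fseq e) i = e i.
Proof. by rewrite (nth_map i) ?size_enum_ord // nth_ord_enum. Qed.

Lemma fseq_inj n : injective (@fseq n).
Proof.
move=> e e' h; apply/ffunP => i; apply/val_inj.
by rewrite /= -!nth_fseq h.
Qed.

Lemma mem_fseq n (e : {ffun 'I_n -> 'I_n}) x : (x \in fseq e) = [exists i, x == e i].
Proof.
apply/mapP/existsP => [[i _ ->]|[i /eqP ->]]; first by exists i.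
by exists i; rewrite ?mem_enum.
Qed.

Lemma dist_fseq n (e : {ffun 'I_n -> 'I_n}) : dist e = dd (fseq e).
Proof.
rewrite /dist /dd cardE -(size_map val); apply: perm_size.
apply: uniq_perm; first by rewrite map_inj_uniq ?enum_uniq //; apply: val_inj.
  exact: undup_uniq.
move=> x; rewrite mem_undup mem_filter mem_fseq.
apply/mapP/andP => [[y]|[xp /existsP [i /eqP xe]]].
  rewrite mem_enum => /imsetP [i]; rewrite inE => ip -> ->.
  by split => //; apply/existsP; exists i.
exists (e i); last by rewrite xe.
by rewrite mem_enum; apply/imsetP; exists i; rewrite ?inE -?xe.
Qed.

Lemma avoids_fseq n (e : {ffun 'I_n -> 'I_n}) :
  avoids021 e <-> isinv (fseq e) /\ ~ cont (fseq e).
Proof.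
rewrite /avoids021; split.
  move=> /andP [/forallP ii /negP nc]; split.
    by move=> k; rewrite size_fseq => kl; rewrite (nth_fseq e (Ordinal kl)) ii.
  move=> [i [j [k [h1 h2 h3 h4 h5]]]]; apply: nc.
  move: h3; rewrite size_fseq => kl.
  have jl := ltn_trans h2 kl; have il := ltn_trans h1 jl.
  apply/existsP; exists (Ordinal il); apply/existsP; exists (Ordinal jl).
  apply/existsP; exists (Ordinal kl).
  move: h4 h5; rewrite (nth_fseq e (Ordinal il)) (nth_fseq e (Ordinal jl)) (nth_fseq e (Ordinal kl)).
  by move=> h4 h5 /=; rewrite h1 h2 h4 h5.
move=> [ii nc]; apply/andP; split.
  apply/forallP => i; have := ii i; rewrite size_fseq nth_fseq; exact.
apply/negP => /existsP [i /existsP [j /existsP [k /and4P [h1 h2 h4 h5]]]].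
apply: nc; exists i, j, k; split => //; first by rewrite size_fseq.
  by rewrite !nth_fseq.
by rewrite !nth_fseq.
Qed.

Lemma inv_bridge m : inv021_dist_poly m.+1 = \sum_(s <- Ginv m) 'X^(dd s).
Proof.
rewrite /inv021_dist_poly -big_filter.
rewrite (eq_bigr (fun e => 'X^(dd (fseq e)))); last by move=> e _; rewrite dist_fseq.
rewrite -(big_map (@fseq m.+1) xpredT (fun s => 'X^(dd s))).
apply: perm_big; apply: uniq_perm.
- by rewrite map_inj_uniq ?filter_uniq ?index_enum_uniq //; apply: fseq_inj.
- exact: Ginv_uniq.
move=> s; apply/mapP/idP.
  move=> [e]; rewrite mem_filter => /andP [av _] ->.
  have [ii nc] := (avoids_fseq e).1 av.
  by apply/Ginv_mem; split => //; rewrite size_fseq.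
move=> /Ginv_mem [ss ii nc].
pose e : {ffun 'I_m.+1 -> 'I_m.+1} := [ffun i : 'I_m.+1 => (inord (nth 0%N s i) : 'I_m.+1)].
have es : fseq e = s.
  apply: (@eq_from_nth _ 0%N); first by rewrite size_fseq ss.
  move=> k; rewrite size_fseq => kl.
  rewrite (nth_fseq e (Ordinal kl)) ffunE inordK //.
  by rewrite ltnS (leq_trans (ii k _)) // ?ss // -ltnS.
exists e => //; rewrite mem_filter mem_index_enum andbT.
by apply/avoids_fseq; rewrite es.
Qed.

End InvM.
Import InvM.

Module SchM.


Notation unit_ := (nat * bool)%type.

Fixpoint incra (i : nat) (u : seq unit_) : seq unit_ :=
  match u with
  | [::] => [::]
  | x :: u' => if i is i'.+1 then x :: incra i' u' else (x.1.+1, x.2) :: u'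
  end.

Fixpoint la (u : seq unit_) : nat :=
  match u with
  | [::] => 0%N
  | x :: u' => if la u' is k.+1 then k.+2 else nat_of_bool (0 < x.1)%N
  end.

Definition ca (u : seq unit_) : nat := count (fun x : unit_ => (0 < x.1)%N) u.

Definition psiS (u : seq unit_) (v : nat) : seq unit_ :=
  if v == 0%N then rcons u (0%N, false) else incra v.-1 (rcons u (0%N, true)).

Definition H := Lg [::] psiS la.

Lemma size_incra i u : size (incra i u) = size u.
Proof. by elim: u i => [|x u IH] [|i] //=; rewrite IH. Qed.

Lemma size_psiS u v : size (psiS u v) = (size u).+1.
Proof. by rewrite /psiS; case: (v == 0%N); rewrite ?size_incra size_rcons. Qed.

Lemma HS m : H m.+1 =
  flatten [seq [seq psiS q v | v <- index_iota 0 m.+2 & adm la q v] | q <- H m].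
Proof. by []. Qed.

Lemma size_H m u : u \in H m -> size u = m.
Proof.
elim: m u => [|m IH] u; first by rewrite inE => /eqP ->.
rewrite HS => /flatten_mapP [q qin]; case/mapP => v _ ->.
by rewrite size_psiS IH.
Qed.

Lemma la_rcons0 u b : la (rcons u (0%N, b)) = la u.
Proof. by elim: u => [|x u IH] //=; rewrite IH. Qed.

Lemma la_le u : (la u <= size u)%N.
Proof.
elim: u => [|x u IH] //=.
case E: (la u) => [|k] /=; first by case: (0 < x.1)%N.
by rewrite -E.
Qed.

Lemma la_incra i w : (i < size w)%N -> la (incra i w) = maxn (la w) i.+1.
Proof.
elim: w i => [|x w IH] [|i] //= hi.
  by case E: (la w) => [|k] /=; [case: (0 < x.1)%N | rewrite maxnC /maxn].
rewrite IH //.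
case E: (la w) => [|k] /=.
  by case: (0 < x.1)%N; lia.
by rewrite maxnSS /= !maxnSS.
Qed.

Lemma ca_rcons0 u b : ca (rcons u (0%N, b)) = ca u.
Proof. by rewrite /ca -cats1 count_cat /= !addn0. Qed.

Lemma ca_incra i w : (i < size w)%N ->
  ca (incra i w) = (ca w + ((nth (0%N, false) w i).1 == 0%N))%N.
Proof.
rewrite /ca; elim: w i => [|x w IH] [|i] //= hi.
  by case: x => [[|a] b] /=; lia.
by rewrite IH // addnA.
Qed.

Lemma pos_nth w i : (i < size w)%N -> (la w <= i.+1)%N ->
  (0 < (nth (0%N, false) w i).1)%N = (la w == i.+1).
Proof.
elim: w i => [|x w IH] [|i] //=.
  by case E: (la w) => [|k] /=; case: (0 < x.1)%N.
move=> hi; case E: (la w) => [|k] /= hl.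
  rewrite IH ?E //; by case: (0 < x.1)%N.
by rewrite IH // E.
Qed.

Lemma la_psiS n q v : q \in H n -> (v < n.+2)%N -> adm la q v ->
  la (psiS q v) = maxn (la q) v.
Proof.
move=> qin vl; rewrite /psiS /adm.
case: (v =P 0%N) => [->|/eqP v0] /= a; first by rewrite la_rcons0 maxn0.
by rewrite la_incra ?size_rcons ?(size_H qin) ?prednK ?lt0n ?la_rcons0 // -ltnS prednK ?lt0n.
Qed.

Lemma ca_psiS n q v : q \in H n -> (v < n.+2)%N -> adm la q v ->
  ca (psiS q v) = (ca q + (la q < v))%N.
Proof.
move=> qin vl; rewrite /psiS /adm.
case: (v =P 0%N) => [->|/eqP v0] /= a; first by rewrite ca_rcons0 addn0.
have vs : (v.-1 < size (rcons q (0%N, true)))%N.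
  by rewrite size_rcons (size_H qin) -ltnS prednK ?lt0n.
rewrite ca_incra // ca_rcons0; congr (_ + _)%N.
have := pos_nth vs; rewrite la_rcons0 prednK ?lt0n // => /(_ a).
by move=> h; rewrite ltn_neqAle a andbT -h negbK.
Qed.

Lemma H_total m : (\sum_(u <- H m) 'X^(ca u) = \sum_(j < m.+1) T m j)%R.
Proof.
apply: Lg_total => //.
- by move=> n q v; apply: la_psiS.
- by move=> n q v; apply: ca_psiS.
Qed.

Lemma incra_inj i : injective (incra i).
Proof.
elim: i => [|i IH] [|x w] [|y w'] //=.
- by case=> h1 h2 ->; congr (_ :: _); case: x y h1 h2 => [a b] [c d] /= [->] ->.
- by case=> -> /IH ->.
Qed.

Lemma snd_incra i w : map snd (incra i w) = map snd w.
Proof. by elim: w i => [|x w IH] [|i] //=; rewrite IH. Qed.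

Lemma H_uniq m : uniq (H m).
Proof.
elim: m => [|m IH] //; apply: Lg_uniq => // q q' v v' qin q'in vl v'l a a' e.
have sv : forall q v, v != 0%N -> map snd (psiS q v) = rcons (map snd q) true.
  by move=> q0 v0 h; rewrite /psiS (negbTE h) snd_incra map_rcons.
have s0 : forall q, map snd (psiS q 0) = rcons (map snd q) false.
  by move=> q0; rewrite /psiS /= map_rcons.
case: (v =P 0%N) => [v0|/eqP vn0]; case: (v' =P 0%N) => [v'0|/eqP v'n0].
- by move: e; rewrite v0 v'0 /psiS /= => /rcons_inj [->].
- by move: (congr1 (map snd) e); rewrite v0 s0 sv // => /rcons_inj [].
- by move: (congr1 (map snd) e); rewrite v'0 s0 sv // => /rcons_inj [].
have vv : v = v'.
  have := la_psiS qin vl a; have := la_psiS q'in v'l a'; rewrite e => -> .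
  move: a a'; rewrite /adm (negbTE vn0) (negbTE v'n0) /= => a a'.
  by rewrite (maxn_idPr a) (maxn_idPr a').
split => //; move: e; rewrite -vv /psiS (negbTE vn0) => /incra_inj /rcons_inj.
by case.
Qed.

Fixpoint vfk (h k : nat) (u : seq unit_) : bool :=
  match u with
  | [::] => h == k
  | x :: u' => if x.2 then (0 < h + x.1) && vfk (h + x.1).-1 k u'
               else vfk (h + x.1) k u'
  end.

Fixpoint endh (h : nat) (u : seq unit_) : nat :=
  match u with
  | [::] => h
  | x :: u' => endh (if x.2 then (h + x.1).-1 else h + x.1) u'
  end.

Lemma vfk_rcons h k u x :
  vfk h k (rcons u x) = vfk h (endh h u) u && vfk (endh h u) k [:: x].
Proof.
elim: u h => [|y u IH] h /=; first by rewrite eqxx.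
by case: y.2; rewrite IH ?andbA.
Qed.

Lemma V1 h k u : vfk h k u -> vfk h k (rcons u (0%N, false)).
Proof.
elim: u h => [|[a b] u IH] h /=; first by rewrite addn0.
case: b => /=; last exact: IH.
by move=> /andP [-> /IH].
Qed.

Lemma V2 h k u : vfk h k u -> vfk h.+1 k (rcons u (0%N, true)).
Proof.
elim: u h => [|[a b] u IH] h /=; first by rewrite addn0.
case: b => /=.
  move=> /andP [p h1]; rewrite -(prednK p); exact: IH.
move=> h1; rewrite addSn; exact: IH.
Qed.

Lemma V3 h k u i : vfk h k u -> (i <= size u)%N -> vfk h k (incra i (rcons u (0%N, true))).
Proof.
elim: u h i => [|[a b] u IH] h [|i] //=.
- by move=> /eqP ->; rewrite addn1 /= eqxx.
- case: b => /=.
    move=> /andP [p v] _; rewrite addnS /= -(prednK p); exact: V2.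
  move=> v _; rewrite addnS; exact: V2.
- case: b => /=.
    by move=> /andP [-> v] il; rewrite IH.
  by move=> v il; rewrite IH.
Qed.

Lemma la0_cons x u : la (x :: u) = 0%N -> la u = 0%N /\ x.1 = 0%N.
Proof.
rewrite /=; case: (la u) => [|k] //=.
by case: x => [[|a] b].
Qed.

Lemma L1 u h k : la u = 0%N -> vfk h k u -> (k <= h)%N.
Proof.
elim: u h => [|x u IH] h /=; first by move=> _ /eqP ->.
move=> /la0_cons [lu x0]; rewrite x0 addn0.
case: x.2.
  move=> /andP [p /(IH _ lu)] h1; apply: leq_trans h1 _; exact: leq_pred.
exact: IH.
Qed.

Lemma L2 u x k : la u = 0%N -> vfk x.+1 k.+1 u -> vfk x k u.
Proof.
elim: u x => [|y u IH] x /=; first by move=> _.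
move=> /la0_cons [lu y0]; rewrite y0 !addn0.
case: y.2 => //=; last exact: IH.
move=> h1.
have := L1 lu h1; case: x h1 => [|x] h1 hk //=.
exact: (IH _ lu h1).
Qed.

Fixpoint dl (u : seq unit_) : seq unit_ :=
  match u with
  | [::] => [::]
  | x :: u' => if (0 < la u')%N then x :: dl u' else (x.1.-1, x.2) :: u'
  end.

Lemma size_dl u : size (dl u) = size u.
Proof. by elim: u => [|x u IH] //=; case: (0 < la u)%N => /=; rewrite ?IH. Qed.

Lemma L4 u : (0 < la u)%N -> incra (la u).-1 (dl u) = u.
Proof.
elim: u => [|x u IH] //=.
case E: (la u) => [|k] /=.
  by case: x => [[|a] b].
by move=> _; rewrite -{2}IH E.
Qed.

Lemma L5 u : (la (dl u) <= la u)%N.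
Proof.
elim: u => [|x u IH] //=.
case E: (la u) => [|k] /=.
  by rewrite E; case: x => [[|[|a]] b].
case E2: (la (dl u)) => [|k2] //; [by case: (0 < x.1)%N | by move: IH; rewrite E2 E].
Qed.

Lemma L3 u h k : vfk h k.+1 u -> (0 < la u)%N -> vfk h k (dl u).
Proof.
elim: u h => [|[a b] u IH] h //=.
case E: (la u) => [|j] /=; last first.
  case: b => /=; last by move=> h1 _; apply: IH; rewrite ?E.
  by move=> /andP [-> h1] _; apply: IH; rewrite ?E.
case: a => [|a] /= h1 hp //.
move: h1; case: b => /=.
  move=> /andP [_]; rewrite addnS /= => h1.
  have := L1 E h1; case E3: (h + a) h1 => [|x] h1 hk //=.
  exact: (L2 E h1).
rewrite addnS => h1.
exact: L2 E h1.
Qed.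

Lemma incra_rcons i w y : (i < size w)%N -> incra i (rcons w y) = rcons (incra i w) y.
Proof. by elim: w i => [|x w IH] [|i] //= h; rewrite IH. Qed.

Lemma incra_last q : incra (size q) (rcons q (0%N, true)) = rcons q (1%N, true).
Proof. by elim: q => [|x q IH] //=; rewrite IH. Qed.

Lemma H_mem m u : u \in H m <-> size u = m /\ vfk 0 0 u.
Proof.
elim: m u => [|m IH] u.
  split; first by rewrite inE => /eqP ->.
  by case: u => [|x u] [] //; rewrite inE.
split.
  rewrite HS => /flatten_mapP [q qin]; case/mapP => v.
  rewrite mem_filter mem_index_iota /= => /andP [a vlt] ->.
  have [sq vq] := (IH q).1 qin.
  split; first by rewrite size_psiS sq.
  rewrite /psiS; case: (v =P 0%N) => [_|/eqP v0]; first exact: V1.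
  by apply: V3 => //; rewrite sq -ltnS prednK ?lt0n.
case/lastP: u => [|q [a b]] [] //; rewrite size_rcons => -[sq].
rewrite vfk_rcons => /andP [vq]; rewrite /=.
have ex : forall q' v, q' \in H m -> (v < m.+2)%N -> adm la q' v ->
    psiS q' v = rcons q (a, b) -> rcons q (a, b) \in H m.+1.
  move=> q' v qin vl av e; rewrite -e HS; apply/flatten_mapP; exists q' => //.
  by apply/mapP; exists v => //; rewrite mem_filter mem_index_iota /= vl andbT.
have lq := la_le q.
case: b ex => ex /=.
  move=> /andP [p /eqP e1].
  case: a p e1 ex => [|[|a]] p e1 ex.
  - rewrite addn0 in p e1.
    have eq1 : endh 0 q = 1%N by case: (endh 0 q) p e1 => [|[|x]].
    rewrite eq1 in vq.
    have lp : (0 < la q)%N.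
      by rewrite lt0n; apply/negP => /eqP l0; have := L1 l0 vq.
    apply: (ex (dl q) (la q)).
    + by apply/IH; rewrite size_dl; split => //; apply: L3.
    + by rewrite ltnS (leq_trans lq) // sq.
    + by rewrite /adm L5 orbT.
    + rewrite /psiS (negbTE (lt0n_neq0 lp)) incra_rcons ?L4 // size_dl.
      by rewrite -ltnS prednK.
  - rewrite addn1 /= in e1; rewrite e1 in vq.
    apply: (ex q m.+1).
    + by apply/IH.
    + by [].
    + by rewrite /adm -sq ltnW ?orbT // ltnS.
    + by rewrite /psiS /= -sq incra_last.
  - by rewrite !addnS in e1.
move=> /eqP e0; have e00 : endh 0 q = 0%N by move: e0; case: (endh 0 q).
have a0 : a = 0%N by move: e0; rewrite e00.
rewrite e00 in vq; rewrite a0 in ex *.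
apply: (ex q 0%N) => //; by apply/IH.
Qed.

End SchM.
Import SchM.

Module WordM.

Definition stp (b : bool) := if b then Down else Flat.
Definition decode (u : seq unit_) : seq step :=
  flatten [seq rcons (nseq x.1 Up) (stp x.2) | x <- u].

Lemma decode_cons x u : decode (x :: u) = nseq x.1 Up ++ stp x.2 :: decode u.
Proof. by rewrite /decode /= cat_rcons. Qed.

Lemma valid_nseq h a w : valid_from h (nseq a Up ++ w) = valid_from (h + a) w.
Proof. by elim: a h => [|a IH] h /=; rewrite ?addn0 // IH addnS. Qed.

Lemma D1 h u : valid_from h (decode u) = vfk h 0 u.
Proof.
elim: u h => [|[a b] u IH] h //=.
rewrite decode_cons valid_nseq /=; case: b => /=; by rewrite IH.
Qed.

Lemma asc_nseq p a c w : c != Up ->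
  asc_from p (nseq a Up ++ c :: w) = (((0 < a) && ~~ p) + asc_from false w)%N.
Proof.
move=> cu; elim: a p => [|a IH] p /=.
  by case: c cu; rewrite ?eqxx // => _; rewrite add0n.
by rewrite IH andbF add0n.
Qed.

Lemma D2 u : asc (decode u) = ca u.
Proof.
rewrite /asc /ca; elim: u => [|[a b] u IH] //=.
rewrite decode_cons asc_nseq ?IH /= ?andbT //; by case: b; apply/eqP.
Qed.

Lemma xlen_cat w1 w2 : xlen (w1 ++ w2) = (xlen w1 + xlen w2)%N.
Proof. by elim: w1 => [|[] w1 IH] //=; rewrite IH. Qed.

Lemma xlen_nseq a : xlen (nseq a Up) = a.
Proof. by elim: a => [|a IH] //=; rewrite IH. Qed.

Lemma D3 h k u : vfk h k u -> (xlen (decode u) + h = 2 * size u + k)%N.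
Proof.
elim: u h => [|[a b] u IH] h /=; first by move=> /eqP ->.
rewrite decode_cons xlen_cat xlen_nseq; case: b => /=.
  move=> /andP [p /IH]; lia.
move=> /IH; lia.
Qed.

Lemma D4 h w : valid_from h w -> exists u, w = decode u.
Proof.
elim: w h => [|c w IH] h; first by exists [::].
case: c => /=.
- move=> hv; have [[|[a b] u] wu] := IH _ hv.
    by move: hv; rewrite wu.
  by exists ((a.+1, b) :: u); rewrite wu !decode_cons.
- move=> /andP [_ /IH [u ->]]; by exists ((0%N, true) :: u); rewrite decode_cons.
- move=> /IH [u ->]; by exists ((0%N, false) :: u); rewrite decode_cons.
Qed.

Fixpoint enc (w : seq step) : seq unit_ :=
  match w with
  | [::] => [::]
  | Up :: w' => if enc w' is x :: u then (x.1.+1, x.2) :: u else [::]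
  | Down :: w' => (0%N, true) :: enc w'
  | Flat :: w' => (0%N, false) :: enc w'
  end.

Lemma enc_nseq a b w : enc (nseq a Up ++ stp b :: w) = (a, b) :: enc w.
Proof. by elim: a => [|a IH] /=; [case: b | rewrite IH]. Qed.

Lemma decodeK : cancel decode enc.
Proof. by elim=> [|[a b] u IH] //; rewrite decode_cons enc_nseq IH. Qed.

Lemma size_xlen w : (size w <= xlen w)%N.
Proof. by elim: w => [|[] w IH] //=; lia. Qed.

Lemma sch_mem m w : (w \in map decode (H m)) = is_schroder m w.
Proof.
apply/mapP/idP.
  move=> [u /H_mem [su vu] ->].
  rewrite /is_schroder D1 vu andbT; have := D3 vu; rewrite su; lia.
move=> /andP [/eqP xl vw].
have [u wu] := D4 vw.
move: vw xl; rewrite wu D1 => vu xl.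
exists u => //; apply/H_mem; split => //.
by have := D3 vu; rewrite xl; rewrite !addn0 => /eqP; rewrite eqn_mul2l /= => /eqP ->.
Qed.

Local Open Scope ring_scope.

Lemma sch_bridge m : schroder_asc_poly m = \sum_(u <- H m) 'X^(ca u).
Proof.
set L := map decode (H m).
have uL : uniq L by rewrite map_inj_uniq ?H_uniq //; apply: can_inj decodeK.
have step1 : forall k : nat,
  \sum_(w : k.-tuple step | is_schroder m w) 'X^(asc w) =
  \sum_(w <- L | size w == k) 'X^(asc w) :> {poly int}.
  move=> k; rewrite -big_filter -[RHS]big_filter.
  rewrite -(big_map (fun t : k.-tuple step => val t) xpredT (fun w => 'X^(asc w))).
  apply: perm_big; apply: uniq_perm.
  - by rewrite map_inj_uniq ?filter_uniq ?index_enum_uniq //; apply: val_inj.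
  - exact: filter_uniq.
  move=> w; rewrite mem_filter sch_mem; apply/mapP/andP.
    by move=> [t]; rewrite mem_filter => /andP [P _] ->; rewrite size_tuple.
  move=> [/eqP sw P]; have hs : size w == k by rewrite sw.
  exists (Tuple hs) => //; by rewrite mem_filter mem_index_enum andbT.
rewrite /schroder_asc_poly; under eq_bigr => k _ do rewrite step1.
under eq_bigr => k _ do rewrite big_mkcond.
rewrite exchange_big /= /L big_map.
apply: eq_big_seq => u uin.
rewrite -big_mkcond /= -D2.
rewrite -(big_mkord (fun k => size (decode u) == k) (fun _ => 'X^(asc (decode u)))).
rewrite (eq_bigl (fun k => k == size (decode u))); last by move=> k; rewrite eq_sym.
rewrite sum_pred1 ltnS.
have : decode u \in L by rewrite map_f.
rewrite sch_mem => /andP [/eqP <- _].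
by rewrite size_xlen.
Qed.

End WordM.
Import WordM.

Theorem mainTheorem5 (n : nat) (hn : (1 <= n)%N) :
  inv021_dist_poly n = schroder_asc_poly n.-1.
Proof.
case: n hn => [|m] // _.
by rewrite inv_bridge Ginv_total sch_bridge H_total.
Qed.
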